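(* Let $k\in\{3,4,5,6\}$ and let $\widehat p_0,\dots,\widehat p_4$ be a normalized configuration of 5 distinct points on $S^2$ minimizing $\sum_{i<j}(4-\|\widehat p_i-\widehat p_j\|^2)^k$ among all 5-point configurations on $S^2$. Let $p_i=\Sigma(\widehat p_i)\in\mathbb{R}^2$ for $i=0,1,2,3$. Then $|p_0|<4$ and $|p_i|<3/2$ for $i=1,2,3$.
   Context: $\Sigma(x,y,z)=(x/(1-z),y/(1-z))$ is stereographic projection from $(0,0,1)$. A configuration $\widehat p_0,\dots,\widehat p_4$ is normalized if $\widehat p_4=(0,0,1)$ and $\|\widehat p_4-\widehat p_0\|\le\|\widehat p_4-\widehat p_i\|$ for $i=1,2,3$. *)

(* Defs.v *)
From Stdlib Require Import Reals Lra.
Open Scope R_scope.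

Definition pt3 : Type := (R * R * R)%type.

Definition px (p : pt3) : R := fst (fst p).
Definition py (p : pt3) : R := snd (fst p).
Definition pz (p : pt3) : R := snd p.

Definition dist2 (p q : pt3) : R :=
  (px p - px q)^2 + (py p - py q)^2 + (pz p - pz q)^2.

Definition dist3 (p q : pt3) : R := sqrt (dist2 p q).

Definition on_sphere (p : pt3) : Prop := px p ^ 2 + py p ^ 2 + pz p ^ 2 = 1.

Definition north : pt3 := (0, 0, 1).

(* A 5-point configuration: indices 0..4 *)
Definition config : Type := nat -> pt3.

Definition config_on_sphere (P : config) : Prop :=
  forall i, (i < 5)%nat -> on_sphere (P i).

Definition distinct5 (P : config) : Prop :=
  forall i j, (i < 5)%nat -> (j < 5)%nat -> i <> j -> P i <> P j.

Definition energy (k : nat) (P : config) : R :=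
  sum_f_R0 (fun i =>
    sum_f_R0 (fun j =>
      if Nat.ltb i j then (4 - dist2 (P i) (P j)) ^ k else 0) 4) 4.

Definition normalized (P : config) : Prop :=
  P 4%nat = north /\
  forall i, (1 <= i <= 3)%nat -> dist3 (P 4%nat) (P 0%nat) <= dist3 (P 4%nat) (P i).

Definition stereo (p : pt3) : R * R :=
  (px p / (1 - pz p), py p / (1 - pz p)).

Definition norm2 (v : R * R) : R := sqrt (fst v ^ 2 + snd v ^ 2).

(* Main.v *)
Require Import Defs.
From Stdlib Require Import Reals Lra Psatz.
Open Scope R_scope.
Lemma energy_expand k P : energy k P =
  (4 - dist2 (P 0%nat) (P 1%nat))^k + (4 - dist2 (P 0%nat) (P 2%nat))^k +
  (4 - dist2 (P 0%nat) (P 3%nat))^k + (4 - dist2 (P 0%nat) (P 4%nat))^k +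
  (4 - dist2 (P 1%nat) (P 2%nat))^k + (4 - dist2 (P 1%nat) (P 3%nat))^k +
  (4 - dist2 (P 1%nat) (P 4%nat))^k + (4 - dist2 (P 2%nat) (P 3%nat))^k +
  (4 - dist2 (P 2%nat) (P 4%nat))^k + (4 - dist2 (P 3%nat) (P 4%nat))^k.
Proof. unfold energy; simpl. ring. Qed.

Lemma div_lt u v w : 0 < w -> u < v * w -> u / w < v.
Proof. intros Hw H. unfold Rdiv. apply Rmult_lt_reg_r with w; auto.
rewrite Rmult_assoc, Rinv_l; lra. Qed.

Lemma stereo_bound p b : on_sphere p -> pz p < 1 -> 0 < b ->
  1 + pz p < b * b * (1 - pz p) -> norm2 (stereo p) < b.
Proof.
  destruct p as [[x y] z]; unfold on_sphere, norm2, stereo, px, py, pz; cbn [fst snd].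
  intros Hs Hz Hb H.
  assert (E : (x / (1 - z)) ^ 2 + (y / (1 - z)) ^ 2 = (1+z)/(1-z)).
  { assert (1 - z <> 0) by lra.
    replace ((x / (1 - z)) ^ 2 + (y / (1 - z)) ^ 2) with ((x^2+y^2)/((1-z)^2)) by (field; auto).
    replace (x^2+y^2) with ((1-z)*(1+z)) by nra. field; auto. }
  rewrite E. rewrite <- (sqrt_square b) by lra.
  apply sqrt_lt_1_alt. split.
  - unfold Rdiv; apply Rmult_le_pos. nra. left; apply Rinv_0_lt_compat; lra.
  - apply div_lt; lra.
Qed.

Lemma a_bounds p q : on_sphere p -> on_sphere q -> 0 <= 4 - dist2 p q <= 4.
Proof.
  destruct p as [[x y] z]; destruct q as [[u v] w];
  unfold on_sphere, dist2, px, py, pz; simpl; intros H1 H2.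
  assert (0 <= (x+u)^2) by apply pow2_ge_0.
  assert (0 <= (y+v)^2) by apply pow2_ge_0.
  assert (0 <= (z+w)^2) by apply pow2_ge_0.
  assert (0 <= (x-u)^2) by apply pow2_ge_0.
  assert (0 <= (y-v)^2) by apply pow2_ge_0.
  assert (0 <= (z-w)^2) by apply pow2_ge_0.
  split; nra.
Qed.

Lemma dist2_north p : on_sphere p -> dist2 north p = 2 - 2 * pz p.
Proof.
  destruct p as [[x y] z]; unfold on_sphere, dist2, north, px, py, pz; simpl; intros; nra.
Qed.

Lemma sphere_z p : on_sphere p -> pz p <= 1 /\ (pz p = 1 -> p = north).
Proof.
  destruct p as [[x y] z]; unfold on_sphere, north, px, py, pz; simpl; intros H.
  split. nra. intros ->.
  assert (x = 0) by nra. assert (y = 0) by nra. subst; reflexivity.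
Qed.

Lemma sum_dist P : config_on_sphere P ->
  dist2 (P 0%nat) (P 1%nat) + dist2 (P 0%nat) (P 2%nat) +
  dist2 (P 0%nat) (P 3%nat) + dist2 (P 0%nat) (P 4%nat) +
  dist2 (P 1%nat) (P 2%nat) + dist2 (P 1%nat) (P 3%nat) +
  dist2 (P 1%nat) (P 4%nat) + dist2 (P 2%nat) (P 3%nat) +
  dist2 (P 2%nat) (P 4%nat) + dist2 (P 3%nat) (P 4%nat) <= 25.
Proof.
  intros H.
  pose proof (H 0%nat ltac:(lia)) as H0; pose proof (H 1%nat ltac:(lia)) as H1;
  pose proof (H 2%nat ltac:(lia)) as H2; pose proof (H 3%nat ltac:(lia)) as H3;
  pose proof (H 4%nat ltac:(lia)) as H4.
  revert H0 H1 H2 H3 H4.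
  destruct (P 0%nat) as [[x0 y0] z0]; destruct (P 1%nat) as [[x1 y1] z1];
  destruct (P 2%nat) as [[x2 y2] z2]; destruct (P 3%nat) as [[x3 y3] z3];
  destruct (P 4%nat) as [[x4 y4] z4].
  unfold on_sphere, dist2, px, py, pz; simpl; intros.
  assert (0 <= (x0+x1+x2+x3+x4)^2) by apply pow2_ge_0.
  assert (0 <= (y0+y1+y2+y3+y4)^2) by apply pow2_ge_0.
  assert (0 <= (z0+z1+z2+z3+z4)^2) by apply pow2_ge_0.
  nra.
Qed.

Definition TBP (s : R) : config := fun i =>
  match i with
  | 0%nat => (1, 0, 0)
  | 1%nat => (-1/2, s/2, 0)
  | 2%nat => (-1/2, -(s/2), 0)
  | 3%nat => (0, 0, -1)
  | _ => (0, 0, 1)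
  end.

Lemma TBP_sphere : config_on_sphere (TBP (sqrt 3)).
Proof.
  pose proof (sqrt_sqrt 3 ltac:(lra)) as Hs.
  intros i Hi; unfold on_sphere, TBP.
  destruct i as [|[|[|[|[|i]]]]]; unfold px, py, pz; simpl; try nra; lia.
Qed.

Lemma TBP_energy k : (1 <= k)%nat -> energy k (TBP (sqrt 3)) = 6 * 2^k + 3.
Proof.
  intros Hk. pose proof (sqrt_sqrt 3 ltac:(lra)) as Hs.
  rewrite energy_expand. unfold TBP, dist2, px, py, pz; simpl.
  repeat match goal with |- context [(4 - ?e)^k] =>
    let v := fresh in
    first [assert (v : e = 3) by nra | assert (v : e = 2) by nra | assert (v : e = 4) by nra];
    rewrite v; clear v end.
  replace (4-3) with 1 by ring. replace (4-2) with 2 by ring. replace (4-4) with 0 by ring.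
  rewrite pow1.
  rewrite pow_i by lia. ring.
Qed.

Lemma cube_tangent a : 0 <= a -> 108/25*a - 432/125 <= a^3.
Proof. intros. assert (0 <= (a - 6/5)^2 * (a + 12/5)) by (apply Rmult_le_pos; [apply pow2_ge_0|lra]).
  assert (HE0: a^3 - (108/25*a - 432/125) = (a-6/5)^2*(a+12/5)) by field. lra. Qed.

Definition hh : R := (36/13)^3 - 108/25*(36/13) + 432/125.

Lemma cube_big a : 36/13 <= a -> 108/25*a - 432/125 + hh <= a^3.
Proof. intros. unfold hh.
  assert (0 <= (a - 36/13) * (a*a + a*(36/13) + (36/13)*(36/13) - 108/25)) by (apply Rmult_le_pos; nra).
  assert (HE0: a^3 - (108/25*a - 432/125 + ((36/13)^3 - 108/25*(36/13) + 432/125)) = (a - 36/13) * (a*a + a*(36/13) + (36/13)*(36/13) - 108/25)) by field. lra. Qed.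

Lemma dist2_sym p q : dist2 p q = dist2 q p.
Proof. unfold dist2; ring. Qed.

Theorem lemma2p2 (k : nat) (P : config) :
  (3 <= k <= 6)%nat ->
  config_on_sphere P ->
  distinct5 P ->
  normalized P ->
  (forall Q : config, config_on_sphere Q -> energy k P <= energy k Q) ->
  norm2 (stereo (P 0%nat)) < 4 /\
  (forall i, (1 <= i <= 3)%nat -> norm2 (stereo (P i)) < 3 / 2).
Proof.
  intros Hk Hs Hd [H4 Hn] Hmin.
  pose proof (Hmin _ TBP_sphere) as HE. rewrite TBP_energy in HE by lia.
  rewrite energy_expand in HE.
  assert (Ha : forall i j, (i < 5)%nat -> (j < 5)%nat -> 0 <= 4 - dist2 (P i) (P j) <= 4)
    by (intros; apply a_bounds; apply Hs; auto).
  assert (Hz : forall i, (i < 4)%nat -> pz (P i) < 1).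
  { intros i Hi. destruct (sphere_z (P i) (Hs i ltac:(lia))) as [H1 H2].
    destruct (Rle_lt_or_eq_dec _ _ H1) as [|He]; auto.
    exfalso. apply (Hd i 4%nat); try lia. rewrite H4. auto. }
  assert (Hd4 : forall i, (i < 4)%nat -> dist2 (P i) (P 4%nat) = 2 - 2 * pz (P i)).
  { intros i Hi. rewrite dist2_sym, H4. apply dist2_north, Hs; lia. }
  assert (Hz0 : forall i, (1 <= i <= 3)%nat -> pz (P i) <= pz (P 0%nat)).
  { intros i Hi. specialize (Hn i Hi). unfold dist3 in Hn.
    apply sqrt_le_0 in Hn.
    - rewrite !(dist2_sym (P 4%nat)), !Hd4 in Hn by lia. lra.
    - rewrite dist2_sym; pose proof (Ha 0%nat 4%nat ltac:(lia) ltac:(lia)); lra.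
    - rewrite dist2_sym; pose proof (Ha i 4%nat ltac:(lia) ltac:(lia)); lra. }
  pose proof (Ha 0%nat 1%nat ltac:(lia) ltac:(lia)) as A01.
  pose proof (Ha 0%nat 2%nat ltac:(lia) ltac:(lia)) as A02.
  pose proof (Ha 0%nat 3%nat ltac:(lia) ltac:(lia)) as A03.
  pose proof (Ha 0%nat 4%nat ltac:(lia) ltac:(lia)) as A04.
  pose proof (Ha 1%nat 2%nat ltac:(lia) ltac:(lia)) as A12.
  pose proof (Ha 1%nat 3%nat ltac:(lia) ltac:(lia)) as A13.
  pose proof (Ha 1%nat 4%nat ltac:(lia) ltac:(lia)) as A14.
  pose proof (Ha 2%nat 3%nat ltac:(lia) ltac:(lia)) as A23.
  pose proof (Ha 2%nat 4%nat ltac:(lia) ltac:(lia)) as A24.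
  pose proof (Ha 3%nat 4%nat ltac:(lia) ltac:(lia)) as A34.
  pose proof (sum_dist P Hs) as HS.
  assert (HS' : (4 - dist2 (P 0%nat) (P 1%nat)) + (4 - dist2 (P 0%nat) (P 2%nat)) +
  (4 - dist2 (P 0%nat) (P 3%nat)) + (4 - dist2 (P 0%nat) (P 4%nat)) +
  (4 - dist2 (P 1%nat) (P 2%nat)) + (4 - dist2 (P 1%nat) (P 3%nat)) +
  (4 - dist2 (P 1%nat) (P 4%nat)) + (4 - dist2 (P 2%nat) (P 3%nat)) +
  (4 - dist2 (P 2%nat) (P 4%nat)) + (4 - dist2 (P 3%nat) (P 4%nat)) >= 15) by lra.
  clear HS.
  set (a01 := 4 - dist2 (P 0%nat) (P 1%nat)) in *.
  set (a02 := 4 - dist2 (P 0%nat) (P 2%nat)) in *.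
  set (a03 := 4 - dist2 (P 0%nat) (P 3%nat)) in *.
  set (a04 := 4 - dist2 (P 0%nat) (P 4%nat)) in *.
  set (a12 := 4 - dist2 (P 1%nat) (P 2%nat)) in *.
  set (a13 := 4 - dist2 (P 1%nat) (P 3%nat)) in *.
  set (a14 := 4 - dist2 (P 1%nat) (P 4%nat)) in *.
  set (a23 := 4 - dist2 (P 2%nat) (P 3%nat)) in *.
  set (a24 := 4 - dist2 (P 2%nat) (P 4%nat)) in *.
  set (a34 := 4 - dist2 (P 3%nat) (P 4%nat)) in *.
  assert (Hpos : 0 <= a01^k /\ 0 <= a02^k /\ 0 <= a03^k /\ 0 <= a04^k /\ 0 <= a12^k /\
     0 <= a13^k /\ 0 <= a14^k /\ 0 <= a23^k /\ 0 <= a24^k /\ 0 <= a34^k)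
    by (repeat split; apply pow_le; lra).
  assert (Hk' : k = 3%nat \/ k = 4%nat \/ k = 5%nat \/ k = 6%nat) by lia.
  assert (T : 108/25*a01 - 432/125 <= a01^3 /\ 108/25*a02 - 432/125 <= a02^3 /\
     108/25*a03 - 432/125 <= a03^3 /\ 108/25*a04 - 432/125 <= a04^3 /\
     108/25*a12 - 432/125 <= a12^3 /\ 108/25*a13 - 432/125 <= a13^3 /\
     108/25*a14 - 432/125 <= a14^3 /\ 108/25*a23 - 432/125 <= a23^3 /\
     108/25*a24 - 432/125 <= a24^3 /\ 108/25*a34 - 432/125 <= a34^3)
    by (repeat split; apply cube_tangent; lra).
  assert (Hhh : 108/25*15 - 10*(432/125) + 2 * hh > 51) by (unfold hh; lra).
  split.
  - destruct (Rlt_or_le (pz (P 0%nat)) (15/17)) as [Hl|Hl].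
    + apply stereo_bound; [apply Hs; lia | apply Hz; lia | lra | lra].
    + exfalso. assert (B : 64/17 <= a04) by (unfold a04; rewrite Hd4 by lia; lra).
      assert (B' : (64/17)^k <= a04^k) by (apply pow_incr; lra).
      destruct Hk' as [ -> | [ -> | [ -> | -> ]]]; simpl in B', HE; lra.
  - intros i Hi.
    destruct (Rlt_or_le (pz (P i)) (5/13)) as [Hl|Hl].
    + apply stereo_bound; [apply Hs; lia | apply Hz; lia | lra | lra].
    + exfalso. pose proof (Hz0 i Hi).
      assert (B : 36/13 <= a04) by (unfold a04; rewrite Hd4 by lia; lra).
      assert (Bi : 36/13 <= 4 - dist2 (P i) (P 4%nat)) by (rewrite Hd4 by lia; lra).
      assert (B' : (36/13)^k <= a04^k) by (apply pow_incr; lra).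
      assert (Bi' : (36/13)^k <= (4 - dist2 (P i) (P 4%nat))^k) by (apply pow_incr; lra).
      pose proof (cube_big _ B) as C1.
      assert (i = 1%nat \/ i = 2%nat \/ i = 3%nat) as [ -> | [ -> | -> ]] by lia;
      [change (4 - dist2 (P 1%nat) (P 4%nat)) with a14 in Bi, Bi'
      |change (4 - dist2 (P 2%nat) (P 4%nat)) with a24 in Bi, Bi'
      |change (4 - dist2 (P 3%nat) (P 4%nat)) with a34 in Bi, Bi'];
      pose proof (cube_big _ Bi) as C2;
      destruct Hk' as [ -> | [ -> | [ -> | -> ]]]; simpl in B', Bi', HE, T, C1, C2, Hpos; lra.
Qed.
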